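(* Let $X$ be a real Banach space, let $n\in\mathbb N$, let $S_1,\dots,S_n$ be $w^*$-slices of $B_{X^*}$ and let $\lambda_1,\dots,\lambda_n\in(0,1]$ with $\sum_{i=1}^n\lambda_i=1$. Put $C:=\sum_{i=1}^n\lambda_i S_i$ and assume $\operatorname{diam}(C)=2$. Then for every $\varepsilon>0$ there exist $f_i,g_i\in S_i$ ($i=1,\dots,n$) and $x\in S_X$ such that $(f_i-g_i)(x)>2-\varepsilon$ for all $i\in\{1,\dots,n\}$; consequently $f_i(x)>1-\varepsilon$ and $g_i(-x)>1-\varepsilon$ for all $i$.
   Context: A $w^*$-slice of $B_{X^*}$ is a set $S(B_{X^*},x,\alpha)=\{f\in B_{X^*}: f(x)>1-\alpha\}$ with $x\in S_X$ and $0<\alpha<1$. $B$, $S$ denote closed unit ball and unit sphere. *)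

(* Defs.v *)
From Stdlib Require Import Reals.
Open Scope R_scope.

Record NormedSpace := {
  carrier :> Type;
  vzero : carrier;
  vadd : carrier -> carrier -> carrier;
  vopp : carrier -> carrier;
  vscal : R -> carrier -> carrier;
  vnorm : carrier -> R;
  vadd_assoc : forall x y z, vadd x (vadd y z) = vadd (vadd x y) z;
  vadd_comm : forall x y, vadd x y = vadd y x;
  vadd_0 : forall x, vadd vzero x = x;
  vadd_opp : forall x, vadd x (vopp x) = vzero;
  vscal_assoc : forall a b x, vscal a (vscal b x) = vscal (a * b) x;
  vscal_1 : forall x, vscal 1 x = x;
  vscal_distr_v : forall a x y, vscal a (vadd x y) = vadd (vscal a x) (vscal a y);
  vscal_distr_s : forall a b x, vscal (a + b) x = vadd (vscal a x) (vscal b x);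
  vnorm_eq0 : forall x, vnorm x = 0 -> x = vzero;
  vnorm_scal : forall a x, vnorm (vscal a x) = Rabs a * vnorm x;
  vnorm_triangle : forall x y, vnorm (vadd x y) <= vnorm x + vnorm y
}.

Arguments vzero {_}. Arguments vadd {_}. Arguments vopp {_}.
Arguments vscal {_}. Arguments vnorm {_}.

Definition complete (X : NormedSpace) : Prop :=
  forall u : nat -> X,
    (forall e, 0 < e -> exists N, forall m k, (N <= m)%nat -> (N <= k)%nat ->
        vnorm (vadd (u m) (vopp (u k))) < e) ->
    exists l : X, forall e, 0 < e -> exists N, forall k, (N <= k)%nat ->
        vnorm (vadd (u k) (vopp l)) < e.

Definition Banach (X : NormedSpace) : Prop := complete X.

Definition in_dual {X : NormedSpace} (f : X -> R) : Prop :=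
  (forall x y, f (vadd x y) = f x + f y) /\
  (forall a x, f (vscal a x) = a * f x) /\
  (exists M, forall x, Rabs (f x) <= M * vnorm x).

Definition dual_norm {X : NormedSpace} (f : X -> R) (r : R) : Prop :=
  is_lub (fun t => exists x : X, vnorm x <= 1 /\ t = Rabs (f x)) r.

Definition dual_ball {X : NormedSpace} (f : X -> R) : Prop :=
  in_dual f /\ forall x : X, vnorm x <= 1 -> Rabs (f x) <= 1.

(* w*-slice S(B_{X^*}, x, alpha) (the side conditions x in S_X, 0<alpha<1
   are hypotheses of the theorem). *)
Definition wslice {X : NormedSpace} (x : X) (alpha : R) (f : X -> R) : Prop :=
  dual_ball f /\ f x > 1 - alpha.

Fixpoint fsum (n : nat) (g : nat -> R) : R :=
  match n with
  | O => 0
  | S k => fsum k g + g k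
  end.

Definition slice_comb {X : NormedSpace} (n : nat) (lambda : nat -> R)
  (x : nat -> X) (alpha : nat -> R) (h : X -> R) : Prop :=
  exists f : nat -> X -> R,
    (forall i, (i < n)%nat -> wslice (x i) (alpha i) (f i)) /\
    forall z : X, h z = fsum n (fun i => lambda i * f i z).

Definition dual_diam {X : NormedSpace} (C : (X -> R) -> Prop) (d : R) : Prop :=
  is_lub (fun t => exists h1 h2, C h1 /\ C h2 /\
                    dual_norm (fun z => h1 z - h2 z) t) d.

(* Main.v *)
Require Import Defs.
From Stdlib Require Import Reals Lra Lia Classical.
Open Scope R_scope.

Lemma lub_approx (E : R -> Prop) r a : is_lub E r -> a < r -> exists s, E s /\ a < s.
Proof.
  intros [Hub Hl] Ha.
  destruct (classic (exists s, E s /\ a < s)) as [H|H]; auto.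
  exfalso. assert (r <= a). { apply Hl. intros s Hs. destruct (Rle_dec s a); auto.
  exfalso; apply H; exists s; split; auto; lra. } lra.
Qed.

Lemma fsum_ext n g h : (forall i, (i < n)%nat -> g i = h i) -> fsum n g = fsum n h.
Proof.
  induction n; simpl; intros H; auto.
  rewrite IHn by (intros; apply H; lia). rewrite (H n) by lia. auto.
Qed.

Lemma fsum_lin n a p q r :
  fsum n (fun i => a * p i - q i + r i) = a * fsum n p - fsum n q + fsum n r.
Proof. induction n; simpl; [lra|]. rewrite IHn. lra. Qed.

Lemma fsum_minus n p q :
  fsum n (fun i => p i - q i) = fsum n p - fsum n q.
Proof. induction n; simpl; [lra|]. rewrite IHn. lra. Qed.

Lemma fsum_nonneg n g : (forall i, (i < n)%nat -> 0 <= g i) -> 0 <= fsum n g.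
Proof.
  induction n; simpl; intros H; [lra|].
  assert (0 <= fsum n g) by (apply IHn; intros; apply H; lia).
  assert (0 <= g n) by (apply H; lia). lra.
Qed.

Lemma fsum_term n g : (forall i, (i < n)%nat -> 0 <= g i) ->
  forall j, (j < n)%nat -> g j <= fsum n g.
Proof.
  induction n; simpl; intros H j Hj; [lia|].
  assert (0 <= fsum n g) by (apply fsum_nonneg; intros; apply H; lia).
  assert (0 <= g n) by (apply H; lia).
  destruct (Nat.eq_dec j n) as [->|Hne]; [lra|].
  assert (g j <= fsum n g) by (apply IHn; [intros; apply H; lia| lia]). lra.
Qed.

Lemma min_pos n (l : nat -> R) : (forall i, (i < n)%nat -> 0 < l i) ->
  exists m, 0 < m /\ forall i, (i < n)%nat -> m <= l i.
Proof.
  induction n; intros H.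
  - exists 1. split; [lra|intros; lia].
  - destruct IHn as [m [Hm Hm']]. intros; apply H; lia.
    assert (0 < l n) by (apply H; lia).
    exists (Rmin m (l n)). split. apply Rmin_glb_lt; lra.
    intros i Hi. destruct (Nat.eq_dec i n) as [->|Hne]. apply Rmin_r.
    eapply Rle_trans. apply Rmin_l. apply Hm'. lia.
Qed.

Lemma ball_bound {X : NormedSpace} (f : X -> R) w :
  dual_ball f -> vnorm w <= 1 -> -1 <= f w <= 1.
Proof.
  intros [_ H] Hw. specialize (H w Hw). revert H. unfold Rabs; destruct Rcase_abs; lra.
Qed.

Lemma dual_zero {X : NormedSpace} (f : X -> R) : in_dual f -> f vzero = 0.
Proof.
  intros [Ha _]. specialize (Ha vzero vzero). rewrite vadd_0 in Ha. lra.
Qed.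

Lemma dual_opp {X : NormedSpace} (f : X -> R) z : in_dual f -> f (vopp z) = - f z.
Proof.
  intros Hf. pose proof (dual_zero f Hf) as H0. destruct Hf as [Ha _].
  specialize (Ha z (vopp z)). rewrite vadd_opp, H0 in Ha. lra.
Qed.

Lemma norm_nonneg {X : NormedSpace} (w : X) : 0 <= vnorm w.
Proof.
  pose proof (vscal_distr_s X 1 (-1) w) as H.
  rewrite vscal_1 in H. replace (1 + -1) with 0 in H by lra.
  pose proof (vnorm_triangle X w (vscal (-1) w)) as T.
  rewrite <- H, !vnorm_scal in T. rewrite Rabs_R0 in T. replace (Rabs (-1)) with 1 in T by (rewrite Rabs_left; lra). lra.
Qed.

Lemma core {X : NormedSpace} n (x : nat -> X) alpha lambda
  (Hlambda : forall i, (i < n)%nat -> 0 < lambda i <= 1)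
  (Hsum : fsum n lambda = 1) (f g : nat -> X -> R) w eps m :
  (forall i, (i < n)%nat -> wslice (x i) (alpha i) (f i) /\ wslice (x i) (alpha i) (g i)) ->
  vnorm w <= 1 -> 0 < m -> (forall i, (i < n)%nat -> m <= lambda i) -> 0 < eps ->
  fsum n (fun i => lambda i * f i w) - fsum n (fun i => lambda i * g i w) > 2 - m * eps ->
  forall i, (i < n)%nat -> f i w - g i w > 2 - eps.
Proof.
  intros Hs Hw Hm Hml He Hgt i Hi.
  assert (Hb : forall j, (j < n)%nat -> f j w - g j w <= 2).
  { intros j Hj. destruct (Hs j Hj) as [[Bf _] [Bg _]].
    pose proof (ball_bound _ _ Bf Hw). pose proof (ball_bound _ _ Bg Hw). lra. }
  assert (HS : fsum n (fun j => lambda j * (2 - (f j w - g j w))) < m * eps).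
  { rewrite (fsum_ext n _ (fun j => 2 * lambda j - lambda j * f j w + lambda j * g j w)).
    rewrite fsum_lin, Hsum. lra. intros; ring. }
  assert (Ht : lambda i * (2 - (f i w - g i w)) <= fsum n (fun j => lambda j * (2 - (f j w - g j w)))).
  { apply (fsum_term n (fun j => lambda j * (2 - (f j w - g j w)))); auto.
    intros j Hj. pose proof (Hb j Hj). pose proof (Hlambda j Hj). nra. }
  pose proof (Hml i Hi). pose proof (Hlambda i Hi).
  assert (lambda i * (2 - (f i w - g i w)) < lambda i * eps) by nra.
  apply Rmult_lt_reg_l in H1; lra.
Qed.

Theorem mainTheorem2 (X : NormedSpace) (HX : Banach X) (n : nat)
  (x : nat -> X) (alpha : nat -> R) (lambda : nat -> R)
  (Hx : forall i, (i < n)%nat -> vnorm (x i) = 1)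
  (Halpha : forall i, (i < n)%nat -> 0 < alpha i < 1)
  (Hlambda : forall i, (i < n)%nat -> 0 < lambda i <= 1)
  (Hsum : fsum n lambda = 1)
  (Hdiam : dual_diam (slice_comb n lambda x alpha) 2) :
  forall eps, 0 < eps ->
    exists (f g : nat -> X -> R) (z : X),
      vnorm z = 1 /\
      (forall i, (i < n)%nat ->
         wslice (x i) (alpha i) (f i) /\ wslice (x i) (alpha i) (g i) /\
         f i z - g i z > 2 - eps) /\
      (forall i, (i < n)%nat ->
         f i z > 1 - eps /\ g i (vopp z) > 1 - eps).
Proof.
  intros eps Heps.
  destruct n as [|n0]. { simpl in Hsum. lra. }
  set (n := S n0) in *.
  destruct (min_pos n lambda) as [m [Hm Hml]]. { intros; apply Hlambda; auto. }
  set (e := Rmin eps 1).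
  assert (He : 0 < e) by (apply Rmin_glb_lt; lra).
  assert (He1 : e <= 1) by apply Rmin_r.
  assert (Hee : e <= eps) by apply Rmin_l.
  assert (Hme : 0 < m * e) by nra.
  destruct (lub_approx _ _ (2 - m * e) Hdiam) as [t [Et Ht]]; [lra|].
  destruct Et as [h1 [h2 [C1 [C2 Hn]]]].
  destruct (lub_approx _ _ (2 - m * e) Hn Ht) as [s [Es Hs]].
  destruct Es as [w [Hw ->]].
  destruct C1 as [f1 [S1 E1]]. destruct C2 as [f2 [S2 E2]].
  assert (Hgood : exists f g : nat -> X -> R,
     (forall i, (i < n)%nat -> wslice (x i) (alpha i) (f i) /\ wslice (x i) (alpha i) (g i)) /\
     fsum n (fun i => lambda i * f i w) - fsum n (fun i => lambda i * g i w) > 2 - m * e).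
  { revert Hs. rewrite E1, E2. unfold Rabs; destruct Rcase_abs; intros.
    - exists f2, f1. split; [intros; split; auto|lra].
    - exists f1, f2. split; [intros; split; auto|lra]. }
  destruct Hgood as [f [g [Hfg Hgt]]].
  pose proof (core n x alpha lambda Hlambda Hsum f g w e m Hfg Hw Hm Hml He Hgt) as Hc.
  set (N := vnorm w).
  assert (HN0 : 0 <= N) by apply norm_nonneg.
  assert (HNn : N <> 0).
  { intros HN. apply vnorm_eq0 in HN. specialize (Hc O ltac:(unfold n; lia)).
    destruct (Hfg O ltac:(unfold n; lia)) as [[[Df _] _] [[Dg _] _]].
    rewrite HN, (dual_zero _ Df), (dual_zero _ Dg) in Hc. lra. }
  assert (HNp : 0 < N) by lra.
  assert (HiN : 1 <= / N). { rewrite <- Rinv_1. apply Rinv_le_contravar; [exact HNp | exact Hw]. }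
  set (z := vscal (/ N) w).
  assert (Hz : vnorm z = 1).
  { unfold z. rewrite vnorm_scal, Rabs_pos_eq. apply Rinv_l; auto. lra. }
  assert (Hval : forall i, (i < n)%nat -> f i z - g i z > 2 - eps).
  { intros i Hi. destruct (Hfg i Hi) as [[[Df _] _] [[Dg _] _]].
    destruct Df as [_ [Sf _]]. destruct Dg as [_ [Sg _]].
    unfold z. rewrite Sf, Sg. specialize (Hc i Hi). nra. }
  exists f, g, z. split; auto. split.
  - intros i Hi. destruct (Hfg i Hi). auto.
  - intros i Hi. destruct (Hfg i Hi) as [[Bf _] [Bg _]].
    pose proof (ball_bound _ z Bf ltac:(lra)). pose proof (ball_bound _ z Bg ltac:(lra)).
    specialize (Hval i Hi). rewrite (dual_opp _ _ (proj1 Bg)). lra.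
Qed.
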